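(* Let $\mathbf A,\mathbf B\in\mathbb R_+^{m\times n}$, $\mathbf c,\mathbf d\in\mathbb R_+^n$, and $\mathcal U=\{\mathbf h\in\mathbb R^m_+:\mathbf R\mathbf h\le\mathbf r\}$ a compact set with $\mathbf R\in\mathbb R_+^{L\times m}$, $\mathbf r\in\mathbb R_+^L$. Let $\mathcal W=\{\mathbf w\in\mathbb R^m_+:\mathbf B^T\mathbf w\le\mathbf d\}$. Suppose there exist a simplex $\mathcal S\subseteq\mathbb R^m$ and $\kappa\ge1$ such that $\mathcal S\subseteq\mathcal W\subseteq\kappa\cdot\mathcal S$. Then $$z_{\sf d\text{-}AR}(\mathbf B)\le z_{\sf d\text{-}Aff}(\mathbf B)\le\kappa\cdot z_{\sf d\text{-}AR}(\mathbf B),$$ and furthermore $$z_{\sf AR}(\mathbf B)\le z_{\sf Aff}(\mathbf B)\le\kappa\cdot z_{\sf AR}(\mathbf B).$$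
   Context: A simplex in $\mathbb R^m$ is the convex hull of $m+1$ affinely independent points; $\kappa\cdot\mathcal S=\{\kappa\mathbf s:\mathbf s\in\mathcal S\}$. The two-stage adjustable robust problem is $$z_{\sf AR}(\mathbf B)=\min_{\mathbf x\in\mathbb R^n_+}\ \mathbf c^T\mathbf x+\max_{\mathbf h\in\mathcal U}\ \min_{\mathbf y(\mathbf h)\in\mathbb R^n_+:\ \mathbf A\mathbf x+\mathbf B\mathbf y(\mathbf h)\ge \mathbf h}\ \mathbf d^T\mathbf y(\mathbf h),$$ and $z_{\sf Aff}(\mathbf B)$ is the same problem with $\mathbf y(\mathbf h)=\mathbf P\mathbf h+\mathbf q$ restricted to be affine: the minimum over $\mathbf x\in\mathbb R^n_+$, $\mathbf P\in\mathbb R^{n\times m}$, $\mathbf q\in\mathbb R^n$ of $\mathbf c^T\mathbf x+\max_{\mathbf h\in\mathcal U}\mathbf d^T(\mathbf P\mathbf h+\mathbf q)$ subject to $\mathbf A\mathbf x+\mathbf B(\mathbf P\mathbf h+\mathbf q)\ge\mathbf h$ and $\mathbf P\mathbf h+\mathbf q\ge\mathbf 0$ for all $\mathbf h\in\mathcal U$. The dualized adjustable problem is $$z_{\sf d\text{-}AR}(\mathbf B)=\min_{\mathbf x\in\mathbb R^n_+}\ \mathbf c^T\mathbf x+\max_{\mathbf w\in\mathcal W}\ \min_{\boldsymbol\lambda(\mathbf w)\in\mathbb R^L_+:\ \mathbf R^T\boldsymbol\lambda(\mathbf w)\ge\mathbf w}\ \left(-(\mathbf A\mathbf x)^T\mathbf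 w+\mathbf r^T\boldsymbol\lambda(\mathbf w)\right),$$ and $z_{\sf d\text{-}Aff}(\mathbf B)$ is its optimal value when $\boldsymbol\lambda(\mathbf w)$ is restricted to be an affine function of $\mathbf w$ (feasible, i.e. $\boldsymbol\lambda(\mathbf w)\ge\mathbf 0$ and $\mathbf R^T\boldsymbol\lambda(\mathbf w)\ge\mathbf w$, for all $\mathbf w\in\mathcal W$). *)

(* Defs.v *)
From HB Require Import structures.
From mathcomp Require Import all_boot all_order all_algebra.
From mathcomp Require Import all_classical all_reals all_analysis.
Set Implicit Arguments. Unset Strict Implicit. Unset Printing Implicit Defensive.
Import Order.TTheory GRing.Theory Num.Theory.
Import numFieldNormedType.Exports.
Local Open Scope classical_set_scope.
Local Open Scope ring_scope.

Definition mxle (R : realType) (p q : nat) (u v : 'M[R]_(p, q)) : Prop :=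
  forall i j, u i j <= v i j.

Definition mxnn (R : realType) (p q : nat) (u : 'M[R]_(p, q)) : Prop :=
  mxle 0 u.

Definition dotv (R : realType) (k : nat) (u v : 'cV[R]_k) : R :=
  (u^T *m v) 0 0.

Definition Uset (R : realType) (m L : nat) (Rm : 'M[R]_(L, m)) (r : 'cV[R]_L)
  : set 'cV[R]_m := [set h | mxnn h /\ mxle (Rm *m h) r].

Definition Wset (R : realType) (m n : nat) (B : 'M[R]_(m, n)) (d : 'cV[R]_n)
  : set 'cV[R]_m := [set w | mxnn w /\ mxle (B^T *m w) d].

Definition z_AR (R : realType) (m n L : nat) (A B : 'M[R]_(m, n))
  (c d : 'cV[R]_n) (Rm : 'M[R]_(L, m)) (r : 'cV[R]_L) : \bar R :=
  ereal_inf [set ((dotv c x)%:E +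
        ereal_sup [set ereal_inf [set (dotv d y)%:E | y in
                     [set y : 'cV[R]_n | mxnn y /\ mxle h (A *m x + B *m y)]]
                  | h in Uset Rm r])%E
      | x in [set x : 'cV[R]_n | mxnn x]].

Definition aff_feasible (R : realType) (m n L : nat) (A B : 'M[R]_(m, n))
  (Rm : 'M[R]_(L, m)) (r : 'cV[R]_L)
  (x : 'cV[R]_n) (P : 'M[R]_(n, m)) (q : 'cV[R]_n) : Prop :=
  mxnn x /\ forall h, Uset Rm r h ->
    mxle h (A *m x + B *m (P *m h + q)) /\ mxnn (P *m h + q).

Definition z_Aff (R : realType) (m n L : nat) (A B : 'M[R]_(m, n))
  (c d : 'cV[R]_n) (Rm : 'M[R]_(L, m)) (r : 'cV[R]_L) : \bar R :=
  ereal_inf [set ((dotv c xPq.1.1)%:E +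
        ereal_sup [set (dotv d (xPq.1.2 *m h + xPq.2))%:E | h in Uset Rm r])%E
      | xPq in [set xPq : 'cV[R]_n * 'M[R]_(n, m) * 'cV[R]_n |
                 aff_feasible A B Rm r xPq.1.1 xPq.1.2 xPq.2]].

Definition z_dAR (R : realType) (m n L : nat) (A B : 'M[R]_(m, n))
  (c d : 'cV[R]_n) (Rm : 'M[R]_(L, m)) (r : 'cV[R]_L) : \bar R :=
  ereal_inf [set ((dotv c x)%:E +
        ereal_sup [set ereal_inf [set (- dotv (A *m x) w + dotv r lam)%:E | lam in
                     [set lam : 'cV[R]_L | mxnn lam /\ mxle w (Rm^T *m lam)]]
                  | w in Wset B d])%E
      | x in [set x : 'cV[R]_n | mxnn x]].

Definition daff_feasible (R : realType) (m n L : nat) (B : 'M[R]_(m, n))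
  (d : 'cV[R]_n) (Rm : 'M[R]_(L, m))
  (x : 'cV[R]_n) (Q : 'M[R]_(L, m)) (p : 'cV[R]_L) : Prop :=
  mxnn x /\ forall w, Wset B d w ->
    mxnn (Q *m w + p) /\ mxle w (Rm^T *m (Q *m w + p)).

Definition z_dAff (R : realType) (m n L : nat) (A B : 'M[R]_(m, n))
  (c d : 'cV[R]_n) (Rm : 'M[R]_(L, m)) (r : 'cV[R]_L) : \bar R :=
  ereal_inf [set ((dotv c xQp.1.1)%:E +
        ereal_sup [set (- dotv (A *m xQp.1.1) w
                        + dotv r (xQp.1.2 *m w + xQp.2))%:E | w in Wset B d])%E
      | xQp in [set xQp : 'cV[R]_n * 'M[R]_(L, m) * 'cV[R]_L |
                 daff_feasible B d Rm xQp.1.1 xQp.1.2 xQp.2]].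

Definition conv_hull (R : realType) (m k : nat) (v : 'I_k -> 'cV[R]_m)
  : set 'cV[R]_m :=
  [set s | exists theta : 'I_k -> R, (forall i, 0 <= theta i) /\
           \sum_i theta i = 1 /\ s = \sum_i theta i *: v i].

Definition aff_indep (R : realType) (m k : nat) (v : 'I_k -> 'cV[R]_m) : Prop :=
  forall a : 'I_k -> R, \sum_i a i = 0 -> \sum_i a i *: v i = 0 ->
    forall i, a i = 0.

Definition is_simplex (R : realType) (m : nat) (S : set 'cV[R]_m) : Prop :=
  exists v : 'I_m.+1 -> 'cV[R]_m, aff_indep v /\ S = conv_hull v.

Definition scale_set (R : realType) (m : nat) (kappa : R) (S : set 'cV[R]_m)
  : set 'cV[R]_m := [set kappa *: s | s in S].

(* Main.v *)
Require Import Defs.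
From HB Require Import structures.
From mathcomp Require Import all_boot all_order all_algebra.
From mathcomp Require Import all_classical all_reals all_analysis.
From mathcomp Require Import ring lra.
Set Implicit Arguments. Unset Strict Implicit. Unset Printing Implicit Defensive.
Import Order.TTheory GRing.Theory Num.Theory.
Import numFieldNormedType.Exports.
Local Open Scope classical_set_scope.
Local Open Scope ring_scope.

Section FMs.
Variable R : realFieldType.

Lemma sandwich_seq (ls us : seq R) : (forall l u, l \in ls -> u \in us -> l <= u) ->
  exists t, (forall l, l \in ls -> l <= t) /\ (forall u, u \in us -> t <= u).
Proof.
elim: ls => [|l ls IH] H.
  elim: us {H} => [|u us IHu]; first by exists 0.
  case: IHu => t [_ Ht]; exists (Num.min t u); split => // v.
  rewrite inE => /orP[/eqP->|/Ht tv]; first by rewrite ge_min lexx orbT.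
  by rewrite ge_min tv.
case: IH => [l' u l'in uin|t [Hl Hu]]; first by apply: H => //; rewrite inE l'in orbT.
exists (Num.max t l); split.
  move=> v; rewrite inE => /orP[/eqP->|/Hl tv]; first by rewrite le_max lexx orbT.
  by rewrite le_max tv.
move=> u uin; rewrite ge_max Hu //=; apply: H => //; by rewrite inE eqxx.
Qed.

Lemma sandwich (I : finType) (P Q : pred I) (lo up : I -> R) :
  (forall i j, P i -> Q j -> lo i <= up j) ->
  exists t, (forall i, P i -> lo i <= t) /\ (forall j, Q j -> t <= up j).
Proof.
move=> H.
have [|t [H1 H2]] := @sandwich_seq [seq lo i | i <- enum I & P i] [seq up j | j <- enum I & Q j].
  move=> l u /mapP[i]; rewrite mem_filter => /andP[Pi _] -> /mapP[j].
  by rewrite mem_filter => /andP[Qj _] ->; apply: H.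
exists t; split.
  by move=> i Pi; apply: H1; apply/mapP; exists i => //; rewrite mem_filter Pi mem_enum.
by move=> j Qj; apply: H2; apply/mapP; exists j => //; rewrite mem_filter Qj mem_enum.
Qed.

Lemma sum_ind (I : finType) (i : I) (F : I -> R) : \sum_j (j == i)%:R * F j = F i.
Proof.
rewrite (bigD1 i) //= eqxx mul1r big1 ?addr0 // => j /negbTE ->; by rewrite mul0r.
Qed.

Definition sat k (I : finType) (a : I -> 'I_k -> R) (b : I -> R) (z : 'I_k -> R) :=
  forall i, \sum_l a i l * z l <= b i.

Lemma widen_lift k (l : 'I_k) : widen_ord (leqnSn k) l = lift ord_max l.
Proof. by apply: val_inj => /=; rewrite /bump leqNgt ltn_ord. Qed.

Section Step.
Variables (k : nat) (I : finType) (a : I -> 'I_k.+1 -> R) (b : I -> R).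
Let al i := a i ord_max.
Definition lam (p : I * I) (i' : I) : R :=
  if al p.1 == 0 then (i' == p.1)%:R
  else if (0 < al p.1) && (al p.2 < 0) then
    (i' == p.1)%:R * (- al p.2) + (i' == p.2)%:R * al p.1
  else 0.
Definition a' (p : I * I) (l : 'I_k) : R :=
  \sum_i' lam p i' * a i' (widen_ord (leqnSn k) l).
Definition b' (p : I * I) : R := \sum_i' lam p i' * b i'.

Lemma lam_ge0 p i' : 0 <= lam p i'.
Proof.
rewrite /lam; case: ifP => _; first by case: (_ == _).
case: ifP => // /andP[h1 h2].
apply: addr_ge0; apply: mulr_ge0; try by case: (_ == _).
  by rewrite oppr_ge0 ltW.
by rewrite ltW.
Qed.

Lemma lam_sum p (F : I -> R) : \sum_i' lam p i' * F i' =
  if al p.1 == 0 then F p.1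
  else if (0 < al p.1) && (al p.2 < 0) then (- al p.2) * F p.1 + al p.1 * F p.2
  else 0.
Proof.
rewrite /lam; case: ifP => _; first by rewrite sum_ind.
case: ifP => _; last by rewrite big1 // => i _; rewrite mul0r.
rewrite (eq_bigr (fun i' => (i' == p.1)%:R * ((- al p.2) * F i') + (i' == p.2)%:R * (al p.1 * F i'))).
  by rewrite big_split /= !sum_ind.
by move=> i _; ring.
Qed.

Lemma lam_last p : \sum_i' lam p i' * a i' ord_max = 0.
Proof.
rewrite lam_sum; case: ifP => [/eqP //|_].
by case: ifP => // _; rewrite /al; ring.
Qed.

Lemma elim_step : (exists z', sat a' b' z') -> exists z, sat a b z.
Proof.
case=> z' Hz'.
pose S i := b i - \sum_(l < k) a i (widen_ord (leqnSn k) l) * z' l.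
have key p : 0 <= \sum_i' lam p i' * S i'.
  have := Hz' p; rewrite /a' /b' -subr_ge0.
  rewrite (eq_bigr (fun l => \sum_i' lam p i' * (a i' (widen_ord (leqnSn k) l) * z' l))); last first.
    by move=> l _; rewrite mulr_suml; apply: eq_bigr => i _; rewrite mulrA.
  rewrite exchange_big /= -sumrB; congr (0 <= _); apply: eq_bigr => i _.
  by rewrite /S mulrBr mulr_sumr.
have k0 i : al i = 0 -> 0 <= S i.
  move=> h; have := key (i, i); by rewrite lam_sum /= h eqxx.
have k2 i j : 0 < al i -> al j < 0 -> S j / al j <= S i / al i.
  move=> hi hj; have := key (i, j); rewrite lam_sum /= gt_eqF // hi hj /=.
  have ne : al j != 0 by rewrite lt_eqF.
  have ne' : al i != 0 by rewrite gt_eqF.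
  have -> : - al j * S i + al i * S j = (al i * - al j) * (S i / al i - S j / al j).
    by field; rewrite ?ne ?ne'.
  by rewrite pmulr_rge0 ?subr_ge0 // mulr_gt0 // oppr_gt0.
have [t [Ht1 Ht2]] := @sandwich I (fun j => al j < 0) (fun i => 0 < al i)
   (fun j => S j / al j) (fun i => S i / al i) (fun j i hj hi => k2 i j hi hj).
exists (fun l => if unlift ord_max l is Some l' then z' l' else t) => i.
rewrite big_ord_recr /= unlift_none.
rewrite (eq_bigr (fun l => a i (widen_ord (leqnSn k) l) * z' l)); last first.
  by move=> l _; rewrite widen_lift liftK -widen_lift.
rewrite -lerBrDl -/(S i).
case: (ltgtP (al i) 0) => h.
- have := Ht1 i h; rewrite ler_ndivrMr // mulrC //.
- have := Ht2 i h; rewrite ler_pdivlMr // mulrC //.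
- by rewrite /al in h; rewrite h mul0r; apply: k0.
Qed.

End Step.

Lemma TA k : forall (I : finType) (a : I -> 'I_k -> R) (b : I -> R),
  ~ (exists z, sat a b z) ->
  exists mu : I -> R, (forall i, 0 <= mu i) /\ (forall l, \sum_i mu i * a i l = 0)
     /\ \sum_i mu i * b i < 0.
Proof.
elim: k => [|k IH] I a b Hn.
  case: (boolP [exists i, b i < 0]) => [/existsP [i hi]|/existsPn H]; last first.
    exfalso; apply: Hn; exists (fun _ => 0) => i.
    by rewrite big_ord0; move: (H i); rewrite -leNgt.
  exists (fun j => (j == i)%:R); split; first by move=> j; case: (_ == _).
  by split; [case | rewrite sum_ind].
have Hn' : ~ (exists z', sat (a' a) (b' a b) z') by move/elim_step.
have [mu' [H1 [H2 H3]]] := IH _ _ _ Hn'.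
exists (fun i' => \sum_p mu' p * lam a p i'); split.
  by move=> i'; apply: sumr_ge0 => p _; apply: mulr_ge0 => //; apply: lam_ge0.
have ex F : \sum_i' (\sum_p mu' p * lam a p i') * F i' = \sum_p mu' p * \sum_i' lam a p i' * F i'.
  rewrite (eq_bigr (fun i' => \sum_p mu' p * (lam a p i' * F i'))); last first.
    by move=> i _; rewrite mulr_suml; apply: eq_bigr => p _; rewrite mulrA.
  by rewrite exchange_big /=; apply: eq_bigr => p _; rewrite mulr_sumr.
split; last by rewrite ex.
move=> l; rewrite ex; case: (unliftP ord_max l) => [l'|] ->.
  rewrite -[RHS](H2 l'); apply: eq_bigr => p _; by rewrite /a' widen_lift.
by rewrite big1 // => p _; rewrite lam_last mulr0.
Qed.

End FMs.

Section LDs.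
Variable R : realType.

Lemma dotvE k (u v : 'cV[R]_k) : dotv u v = \sum_i u i 0 * v i 0.
Proof. by rewrite /dotv mxE; apply: eq_bigr => i _; rewrite mxE. Qed.

Lemma LD m n (M : 'M[R]_(m,n)) (e : 'cV_n) (f : 'cV_m) (bb : R) :
  mxnn e -> (forall u, mxnn u -> mxle (M^T *m u) e -> dotv f u <= bb) ->
  exists y, mxnn y /\ mxle f (M *m y) /\ dotv e y <= bb.
Proof.
move=> e0 Hyp.
pose I := ('I_n + 'I_m + 'I_1)%type.
pose a : I -> 'I_n -> R := fun i l => match i with
  | inl (inl k) => - (l == k)%:R | inl (inr j) => - M j l | inr _ => e l 0 end.
pose b : I -> R := fun i => match i with
  | inl (inl _) => 0 | inl (inr j) => - f j 0 | inr _ => bb end.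
case: (pselect (exists z, sat a b z)) => [[z Hz]|Hn].
  exists (\col_l z l); split; [|split].
  - move=> i j; rewrite !mxE; have := Hz (inl (inl i)); rewrite /a /b.
    rewrite (eq_bigr (fun l => - ((l == i)%:R * z l))); last by move=> l _; rewrite mulNr.
    by rewrite sumrN sum_ind oppr_le0.
  - move=> i j; rewrite (ord1 j) !mxE; have := Hz (inl (inr i)); rewrite /a /b.
    rewrite (eq_bigr (fun l => - (M i l * z l))); last by move=> l _; rewrite mulNr.
    rewrite sumrN lerN2 => H; apply: le_trans H _; rewrite le_eqVlt; apply/orP; left; apply/eqP.
    by apply: eq_bigr => l _; rewrite mxE.
  - rewrite dotvE; have := Hz (inr ord0); rewrite /a /b => H; apply: le_trans H.
    by rewrite le_eqVlt; apply/orP; left; apply/eqP; apply: eq_bigr => l _; rewrite mxE.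
have [mu [H1 [H2 H3]]] := TA Hn.
pose al k := mu (inl (inl k)); pose u j := mu (inl (inr j)); pose t := mu (inr ord0).
have Eq l : - al l - \sum_j u j * M j l + t * e l 0 = 0.
  have := H2 l; rewrite !big_sumType big_ord1 /= /a.
  rewrite (eq_bigr (fun k => - ((k == l)%:R * al k))); last first.
    by move=> k _; rewrite /al mulrN eq_sym mulrC.
  rewrite sumrN sum_ind.
  rewrite (eq_bigr (fun j => - (u j * M j l))); last by move=> j _; rewrite mulrN.
  by rewrite sumrN.
have Ineq : - \sum_j u j * f j 0 + t * bb < 0.
  have := H3; rewrite !big_sumType big_ord1 /= /b big1 ?add0r; last by move=> k _; rewrite mulr0.
  rewrite (eq_bigr (fun j => - (u j * f j 0))); last by move=> j _; rewrite mulrN.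
  by rewrite sumrN.
pose U := \col_j u j.
have U0 : mxnn U by move=> i j; rewrite !mxE; apply: H1.
have MU l : (M^T *m U) l 0 = t * e l 0 - al l.
  rewrite mxE.
  rewrite (eq_bigr (fun j => u j * M j l)); last by move=> j _; rewrite !mxE mulrC.
  have : - al l + t * e l 0 - \sum_j u j * M j l = 0 by rewrite -[RHS](Eq l); ring.
  by move/eqP; rewrite subr_eq0 => /eqP <-; ring.
have fU : dotv f U = \sum_j u j * f j 0.
  by rewrite dotvE; apply: eq_bigr => j _; rewrite mxE mulrC.
have al0 l : 0 <= al l by apply: H1.
have t0 : 0 <= t by apply: H1.
exfalso.
case: (ltgtP t 0) => ht; first by move: t0; rewrite leNgt ht.
- have := Hyp (t^-1 *: U).
  have -> : dotv f (t^-1 *: U) = t^-1 * dotv f U.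
    by rewrite /dotv -scalemxAr mxE.
  have H : mxnn (t^-1 *: U).
    by move=> i j; rewrite !mxE mulr_ge0 ?invr_ge0 //; apply: H1.
  have H' : mxle (M^T *m (t^-1 *: U)) e.
    move=> i j; rewrite (ord1 j) -scalemxAr mxE MU.
    rewrite mulrBr mulrA mulVf ?gt_eqF // mul1r lerBlDr lerDl mulr_ge0 // invr_ge0 ltW //.
  move=> /(_ H H'); rewrite fU ler_pdivrMl // => h.
  move: Ineq; rewrite mulrC; lra.
- have fpos : 0 < \sum_j u j * f j 0 by move: Ineq; rewrite ht mul0r addr0 oppr_lt0.
  pose s := (`|bb| + 1) / \sum_j u j * f j 0.
  have s0 : 0 <= s by rewrite divr_ge0 // ?ltW // addr_ge0.
  have := Hyp (s *: U).
  have H : mxnn (s *: U) by move=> i j; rewrite !mxE mulr_ge0 //; apply: H1.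
  have H' : mxle (M^T *m (s *: U)) e.
    move=> i j; rewrite (ord1 j) -scalemxAr mxE MU ht mul0r sub0r.
    apply: le_trans (e0 i 0); last first. 
    by rewrite mxE mulrN oppr_le0 mulr_ge0.
  move=> /(_ H H'); rewrite /dotv -scalemxAr mxE -/(dotv f U) fU /s.
  rewrite mulfVK ?gt_eqF //.
  have := ler_norm bb; lra.
Qed.

End LDs.

Section Help.
Variable R : realType.
Implicit Types (k p : nat).

Lemma mxnnE p q (u : 'M[R]_(p,q)) : mxnn u <-> forall i j, 0 <= u i j.
Proof. by split => H i j; move: (H i j); rewrite mxE. Qed.

Lemma mxleE p q (u v : 'M[R]_(p,q)) : mxle u v <-> mxnn (v - u).
Proof.
split => H i j; move: (H i j); rewrite !mxE ?subr_ge0 //.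
Qed.

Lemma mxle_trans p q (u v w : 'M[R]_(p,q)) : mxle u v -> mxle v w -> mxle u w.
Proof. by move=> H1 H2 i j; apply: le_trans (H1 i j) (H2 i j). Qed.

Lemma mxle_refl p q (u : 'M[R]_(p,q)) : mxle u u.
Proof. by move=> i j. Qed.

Lemma mxleD p q (u1 v1 u2 v2 : 'M[R]_(p,q)) : mxle u1 v1 -> mxle u2 v2 -> mxle (u1 + u2) (v1 + v2).
Proof. by move=> H1 H2 i j; rewrite !mxE lerD. Qed.

Lemma mxnnD p q (u v : 'M[R]_(p,q)) : mxnn u -> mxnn v -> mxnn (u + v).
Proof. by move=> H1 H2; have := mxleD H1 H2; rewrite addr0. Qed.

Lemma mxnn_mul p q s (M : 'M[R]_(p,q)) (v : 'M[R]_(q,s)) : mxnn M -> mxnn v -> mxnn (M *m v).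
Proof.
move=> /mxnnE H1 /mxnnE H2; apply/mxnnE => i j; rewrite mxE.
by apply: sumr_ge0 => l _; apply: mulr_ge0.
Qed.

Lemma mxle_mul p q s (G M : 'M[R]_(p,q)) (v : 'M[R]_(q,s)) :
  mxle G M -> mxnn v -> mxle (G *m v) (M *m v).
Proof.
move=> H /mxnnE v0 i j; rewrite !mxE; apply: ler_sum => l _.
by apply: ler_wpM2r.
Qed.

Lemma mxle_mulr p q s (M : 'M[R]_(p,q)) (u v : 'M[R]_(q,s)) :
  mxnn M -> mxle u v -> mxle (M *m u) (M *m v).
Proof.
move=> /mxnnE M0 H i j; rewrite !mxE; apply: ler_sum => l _.
by apply: ler_wpM2l.
Qed.

Lemma dotvC k (u v : 'cV[R]_k) : dotv u v = dotv v u.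
Proof. by rewrite !dotvE; apply: eq_bigr => i _; rewrite mulrC. Qed.

Lemma dotvDr k (u v w : 'cV[R]_k) : dotv u (v + w) = dotv u v + dotv u w.
Proof. by rewrite /dotv mulmxDr mxE. Qed.

Lemma dotvDl k (u v w : 'cV[R]_k) : dotv (v + w) u = dotv v u + dotv w u.
Proof. by rewrite dotvC dotvDr !(dotvC u). Qed.

Lemma dotvNr k (u v : 'cV[R]_k) : dotv u (- v) = - dotv u v.
Proof. by rewrite /dotv mulmxN mxE. Qed.

Lemma dotvNl k (u v : 'cV[R]_k) : dotv (- v) u = - dotv v u.
Proof. by rewrite dotvC dotvNr dotvC. Qed.

Lemma dotvBr k (u v w : 'cV[R]_k) : dotv u (v - w) = dotv u v - dotv u w.
Proof. by rewrite dotvDr dotvNr. Qed.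

Lemma dotvBl k (u v w : 'cV[R]_k) : dotv (v - w) u = dotv v u - dotv w u.
Proof. by rewrite dotvDl dotvNl. Qed.

Lemma dotvZr k a (u v : 'cV[R]_k) : dotv u (a *: v) = a * dotv u v.
Proof. by rewrite /dotv -scalemxAr mxE. Qed.

Lemma dotvZl k a (u v : 'cV[R]_k) : dotv (a *: v) u = a * dotv v u.
Proof. by rewrite dotvC dotvZr dotvC. Qed.

Lemma dotv0r k (u : 'cV[R]_k) : dotv u 0 = 0.
Proof. by rewrite /dotv mulmx0 mxE. Qed.

Lemma dotv0l k (u : 'cV[R]_k) : dotv 0 u = 0.
Proof. by rewrite dotvC dotv0r. Qed.

Lemma dotv_sumr k (I : finType) (u : 'cV[R]_k) (F : I -> 'cV[R]_k) :
  dotv u (\sum_i F i) = \sum_i dotv u (F i).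
Proof. by rewrite /dotv mulmx_sumr summxE. Qed.

Lemma dotv_mul k p (u : 'cV[R]_k) (M : 'M[R]_(k, p)) (v : 'cV[R]_p) :
  dotv u (M *m v) = dotv (M^T *m u) v.
Proof. by rewrite /dotv trmx_mul trmxK mulmxA. Qed.

Lemma dot_ge0 k (u v : 'cV[R]_k) : mxnn u -> mxnn v -> 0 <= dotv u v.
Proof.
move=> /mxnnE H1 /mxnnE H2; rewrite dotvE; apply: sumr_ge0 => i _; exact: mulr_ge0.
Qed.

Lemma dot_lel k (z u v : 'cV[R]_k) : mxnn z -> mxle u v -> dotv u z <= dotv v z.
Proof.
move=> /mxnnE H1 H2; rewrite !dotvE; apply: ler_sum => i _; exact: ler_wpM2r.
Qed.

Lemma dot_ler k (z u v : 'cV[R]_k) : mxnn z -> mxle u v -> dotv z u <= dotv z v.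
Proof. by move=> H1 H2; rewrite !(dotvC z); apply: dot_lel. Qed.

End Help.

Section Bary.
Variables (R : realType) (m : nat) (v : 'I_m.+1 -> 'cV[R]_m).
Hypothesis hv : aff_indep v.

Definition Mv : 'M[R]_(m.+1) :=
  col_mx (const_mx 1 : 'M[R]_(1, m.+1)) (\matrix_(i, j) v j i 0).

Lemma Mv_mul (th : 'cV[R]_(m.+1)) :
  (Mv *m th : 'M[R]_(1 + m, 1)) = col_mx (const_mx (\sum_j th j 0) : 'M[R]_(1,1)) (\sum_j th j 0 *: v j).
Proof.
have e1 : (const_mx 1 : 'M[R]_(1, m.+1)) *m th = const_mx (\sum_j th j 0).
  by apply/matrixP => i k; rewrite !mxE; apply: eq_bigr => j _; rewrite (ord1 k) mxE mul1r.
have e2 : (\matrix_(i, j) v j i 0) *m th = \sum_j th j 0 *: v j.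
  apply/matrixP => i k; rewrite !mxE summxE (ord1 k); apply: eq_bigr => j _; by rewrite !mxE mulrC.
by rewrite /Mv (@mul_col_mx _ 1 m) e1 e2.
Qed.

Lemma const0 p q (a : R) : const_mx a = 0 :> 'M[R]_(p.+1, q.+1) -> a = 0.
Proof. by move/matrixP/(_ 0 0); rewrite !mxE. Qed.

Lemma Mv_unit : Mv \in unitmx.
Proof.
rewrite -unitmx_tr -row_free_unit -kermx_eq0; apply/eqP/row_matrixP => i.
rewrite row0; set u := row i _.
have hu : u *m Mv^T = 0 by rewrite /u -row_mul mulmx_ker row0.
have : (Mv *m u^T : 'M[R]_(1 + m, 1)) = col_mx (0 : 'M[R]_(1,1)) (0 : 'cV[R]_m).
  by rewrite col_mx0 -[Mv]trmxK -trmx_mul hu trmx0.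
rewrite Mv_mul => /eq_col_mx [/const0 h1 h2].
have := hv h1 h2 => h; apply/rowP => j; by move: (h j); rewrite !mxE.
Qed.

Definition bc (u : 'cV[R]_m) : 'cV[R]_(m.+1) :=
  invmx Mv *m col_mx (const_mx 1 : 'M[R]_(1, 1)) u.

Lemma Mv_bc u : (Mv *m bc u : 'M[R]_(1 + m, 1)) = col_mx (const_mx 1 : 'M[R]_(1,1)) u.
Proof. by rewrite /bc mulmxA mulmxV ?Mv_unit // mul1mx. Qed.

Lemma bc_sum u : \sum_j bc u j 0 = 1.
Proof. by have := Mv_bc u; rewrite Mv_mul => /eq_col_mx [/matrixP/(_ 0 0) + _]; rewrite !mxE. Qed.

Lemma bc_comb u : \sum_j bc u j 0 *: v j = u.
Proof. by have := Mv_bc u; rewrite Mv_mul => /eq_col_mx [_ ->]. Qed.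

Lemma bc_uniq (th : 'I_m.+1 -> R) u : \sum_j th j = 1 -> \sum_j th j *: v j = u ->
  bc u = \col_j th j.
Proof.
move=> h1 h2; have : (Mv *m (\col_j th j) : 'M[R]_(1 + m, 1)) = col_mx (const_mx 1 : 'M[R]_(1,1)) u.
  rewrite Mv_mul; congr col_mx.
    by apply/matrixP => a b; rewrite !mxE -h1; apply: eq_bigr => j _; rewrite mxE.
  by rewrite -h2; apply: eq_bigr => j _; rewrite mxE.
by rewrite /bc => <-; rewrite mulmxA mulVmx ?Mv_unit // mul1mx.
Qed.

Lemma bc_affine u : bc u = bc 0 + (invmx Mv *m (col_mx (0 : 'M[R]_(1, m)) (1%:M : 'M[R]_m) : 'M[R]_(m.+1, m))) *m u.
Proof.
rewrite /bc -mulmxA -mulmxDr; congr (_ *m _).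
by rewrite (@mul_col_mx _ 1 m) mul0mx mul1mx (@add_col_mx _ 1 m) addr0 add0r.
Qed.

End Bary.

Lemma sum_indv (R : realType) k (I : finType) (j : I) (F : I -> 'cV[R]_k) :
  \sum_i (i == j)%:R *: F i = F j.
Proof.
rewrite (bigD1 j) //= eqxx scale1r big1 ?addr0 // => i /negbTE ->; by rewrite scale0r.
Qed.

Lemma mul_col (R : realType) L k (lam : 'I_k -> 'cV[R]_L) (th : 'I_k -> R) :
  (\matrix_(l, j) lam j l 0) *m (\col_j th j) = \sum_j th j *: lam j.
Proof.
apply/matrixP => l a; rewrite !mxE summxE (ord1 a); apply: eq_bigr => j _.
by rewrite !mxE mulrC.
Qed.

Section Main.
Variables (R : realType) (m n L : nat) (A B : 'M[R]_(m, n))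
  (c d : 'cV[R]_n) (Rm : 'M[R]_(L, m)) (r : 'cV[R]_L).
Hypotheses (A0 : mxnn A) (B0 : mxnn B) (c0 : mxnn c) (d0 : mxnn d) (Rm0 : mxnn Rm) (r0 : mxnn r).

Definition dinner x w := ereal_inf [set (- dotv (A *m x) w + dotv r lam)%:E | lam in
                     [set lam : 'cV[R]_L | mxnn lam /\ mxle w (Rm^T *m lam)]].
Definition dARin x := ereal_sup [set dinner x w | w in Wset B d].
Definition pinner x h := ereal_inf [set (dotv d y)%:E | y in
                     [set y : 'cV[R]_n | mxnn y /\ mxle h (A *m x + B *m y)]].
Definition ARin x := ereal_sup [set pinner x h | h in Uset Rm r].
Definition dAffv x Q p := ereal_sup [set (- dotv (A *m x) w
                        + dotv r (Q *m w + p))%:E | w in Wset B d].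
Definition Affv P q := ereal_sup [set (dotv d (P *m h + q))%:E | h in Uset Rm r].

Lemma z_dAR_E : z_dAR A B c d Rm r =
  ereal_inf [set ((dotv c x)%:E + dARin x)%E | x in [set x : 'cV[R]_n | mxnn x]].
Proof. by []. Qed.
Lemma z_AR_E : z_AR A B c d Rm r =
  ereal_inf [set ((dotv c x)%:E + ARin x)%E | x in [set x : 'cV[R]_n | mxnn x]].
Proof. by []. Qed.
Lemma z_dAff_E : z_dAff A B c d Rm r =
  ereal_inf [set ((dotv c xQp.1.1)%:E + dAffv xQp.1.1 xQp.1.2 xQp.2)%E
      | xQp in [set xQp : 'cV[R]_n * 'M[R]_(L, m) * 'cV[R]_L |
                 daff_feasible B d Rm xQp.1.1 xQp.1.2 xQp.2]].
Proof. by []. Qed.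
Lemma z_Aff_E : z_Aff A B c d Rm r =
  ereal_inf [set ((dotv c xPq.1.1)%:E + Affv xPq.1.2 xPq.2)%E
      | xPq in [set xPq : 'cV[R]_n * 'M[R]_(n, m) * 'cV[R]_n |
                 aff_feasible A B Rm r xPq.1.1 xPq.1.2 xPq.2]].
Proof. by []. Qed.

Lemma inf_le_inf (T1 T2 : Type) (X1 : set T1) (X2 : set T2)
  (F1 : T1 -> \bar R) (F2 : T2 -> \bar R) :
  (forall x2, X2 x2 -> exists2 x1, X1 x1 & (F1 x1 <= F2 x2)%E) ->
  (ereal_inf [set F1 x | x in X1] <= ereal_inf [set F2 x | x in X2])%E.
Proof.
move=> H; apply: le_ereal_inf_tmp => _ [x2 X2x <-].
have [x1 X1x le] := H x2 X2x; apply: ge_ereal_inf; exists (F1 x1) => //.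
by exists x1.
Qed.

Lemma W0 : Wset B d 0.
Proof. by split; [move=> i j | rewrite mulmx0]. Qed.
Lemma U0 : Uset Rm r 0.
Proof. by split; [move=> i j | rewrite mulmx0]. Qed.

Lemma dARin_ge0 x : (0 <= dARin x)%E.
Proof.
apply: le_ereal_sup_tmp; exists (dinner x 0); first by exists 0 => //; exact: W0.
apply: le_ereal_inf_tmp => _ [lam [lam0 _] <-].
by rewrite dotv0r oppr0 add0r lee_fin dot_ge0.
Qed.

Lemma ARin_ge0 x : (0 <= ARin x)%E.
Proof.
apply: le_ereal_sup_tmp; exists (pinner x 0); first by exists 0 => //; exact: U0.
apply: le_ereal_inf_tmp => _ [y [y0 _] <-].
by rewrite lee_fin dot_ge0.
Qed.

Lemma part1 : (z_dAR A B c d Rm r <= z_dAff A B c d Rm r)%E.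
Proof.
rewrite z_dAR_E z_dAff_E; apply: inf_le_inf => -[[x Q] p] [x0 Hf] /=.
exists x => //; apply: leeD2l; apply: ge_ereal_sup => _ [w Ww <-].
apply: ge_ereal_inf; exists (- dotv (A *m x) w + dotv r (Q *m w + p))%:E.
  by exists (Q *m w + p) => //; apply: Hf.
by apply: ereal_sup_ubound; exists w.
Qed.

Lemma part3 : (z_AR A B c d Rm r <= z_Aff A B c d Rm r)%E.
Proof.
rewrite z_AR_E z_Aff_E; apply: inf_le_inf => -[[x P] q] [x0 Hf] /=.
exists x => //; apply: leeD2l; apply: ge_ereal_sup => _ [h Uh <-].
apply: ge_ereal_inf; exists (dotv d (P *m h + q))%:E.
  by exists (P *m h + q) => //; have [? ?] := Hf h Uh; split.
by apply: ereal_sup_ubound; exists h.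
Qed.

Lemma partB x : mxnn x -> (dARin x <= ARin x)%E.
Proof.
move=> x0; have := ARin_ge0 x.
case E: (ARin x) => [s| |] // s0; last by rewrite leey.
apply: ge_ereal_sup => _ [w [w0 Bw] <-].
have Hh h : Uset Rm r h -> dotv w h <= s + dotv (A *m x) w.
  move=> Uh; have : (pinner x h <= s%:E)%E.
    by rewrite -E; apply: ereal_sup_ubound; exists h.
  move=> hs; apply/ler_addgt0Pr => e e0.
  have : (pinner x h < (s + e)%:E)%E by apply: le_lt_trans hs _; rewrite lte_fin ltrDl.
  case/ereal_inf_lt => _ [y [y0 hy] <-]; rewrite lte_fin => dy.
  have h1 := dot_ler w0 hy.
  rewrite dotvDr [dotv w (B *m y)]dotv_mul in h1.
  have h2 : dotv (B^T *m w) y <= dotv d y by apply: dot_lel.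
  rewrite (dotvC (A *m x)); lra.
have [lam [lam0 [lam1 lam2]]] : exists lam, mxnn lam /\ mxle w (Rm^T *m lam)
     /\ dotv r lam <= s + dotv (A *m x) w.
  apply: LD => // u u0 hu; apply: Hh; split => //; by rewrite trmxK in hu.
apply: ge_ereal_inf; exists (- dotv (A *m x) w + dotv r lam)%:E.
  by exists lam.
rewrite lee_fin; lra.
Qed.

Lemma partB' : (z_dAR A B c d Rm r <= z_AR A B c d Rm r)%E.
Proof.
rewrite z_dAR_E z_AR_E; apply: inf_le_inf => x x0; exists x => //.
by apply: leeD2l; apply: partB.
Qed.


Lemma partA x Q p : daff_feasible B d Rm x Q p ->
  (z_Aff A B c d Rm r <= (dotv c x)%:E + dAffv x Q p)%E.
Proof.
move=> [x0 Hf].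
have tge : ((dotv r p)%:E <= dAffv x Q p)%E.
  apply: le_ereal_sup_tmp; exists (- dotv (A *m x) 0 + dotv r (Q *m 0 + p))%:E.
    by exists 0 => //; exact: W0.
  by rewrite mulmx0 add0r dotv0r oppr0 add0r.
case E: (dAffv x Q p) tge => [t| |] // tge; last by rewrite addey // leey.
rewrite lee_fin in tge.
have Ht w : Wset B d w -> - dotv (A *m x) w + dotv r (Q *m w + p) <= t.
  move=> Ww; rewrite -lee_fin -E; apply: ereal_sup_ubound; by exists w.
have [y0 [y00 [y01 y02]]] : exists y, mxnn y /\ mxle (Q^T *m r - A *m x) (B *m y)
     /\ dotv d y <= t - dotv r p.
  apply: LD => // u u0 hu; have := Ht u (conj u0 hu).
  rewrite dotvDr dotv_mul dotvBl; lra.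
have [sig Hsig] : {sig : 'I_L -> 'cV[R]_n & forall l, mxnn (sig l) /\
     mxle (- (row l Q)^T) (B *m sig l) /\ dotv d (sig l) <= p l 0}.
  apply: (@choice _ _ (fun l s => mxnn s /\ mxle (- (row l Q)^T) (B *m s) /\ dotv d s <= p l 0)) => l; apply: LD => // u u0 hu; have [+ _] := Hf u (conj u0 hu).
  move=> /mxnnE /(_ l 0); rewrite mxE => h.
  suff -> : dotv (- (row l Q)^T) u = - (Q *m u) l 0 by lra.
  rewrite dotvNl dotvE mxE; congr (- _); apply: eq_bigr => i _; by rewrite !mxE.
pose f (i : 'I_m) : 'cV[R]_m := \col_a ((a == i)%:R - (Q^T *m Rm) a i).
have [tau Htau] : {tau : 'I_m -> 'cV[R]_n & forall i, mxnn (tau i) /\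
     mxle (f i) (B *m tau i) /\ dotv d (tau i) <= (Rm^T *m p) i 0}.
  apply: (@choice _ _ (fun i s => mxnn s /\ mxle (f i) (B *m s) /\ dotv d s <= (Rm^T *m p) i 0)) => i; apply: LD => // u u0 hu; have [_ +] := Hf u (conj u0 hu).
  move=> /(_ i 0); rewrite mulmxDr mxE mulmxA => h.
  suff -> : dotv (f i) u = u i 0 - (Rm^T *m Q *m u) i 0 by lra.
  rewrite dotvE (eq_bigr (fun a => (a == i)%:R * u a 0 - (Rm^T *m Q) i a * u a 0)).
    by rewrite sumrB sum_ind mxE.
  move=> a _; rewrite !mxE mulrBl; congr (_ - _ * _).
  by apply: eq_bigr => j _; rewrite !mxE mulrC.
pose S : 'M[R]_(n, L) := \matrix_(k, l) sig l k 0.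
pose T : 'M[R]_(n, m) := \matrix_(k, i) tau i k 0.
have S0 : mxnn S by apply/mxnnE => k l; rewrite mxE; have [/mxnnE H _] := Hsig l; apply: H.
have T0 : mxnn T by apply/mxnnE => k l; rewrite mxE; have [/mxnnE H _] := Htau l; apply: H.
have BS : mxle (- Q^T) (B *m S).
  move=> a l; have [_ [H _]] := Hsig l; move: (H a 0).
  rewrite !mxE => h; apply: le_trans h _; rewrite le_eqVlt; apply/orP; left; apply/eqP.
  by apply: eq_bigr => k _; rewrite !mxE.
have BT : mxle (1%:M - Q^T *m Rm) (B *m T).
  move=> a i; have [_ [H _]] := Htau i; move: (H a 0).
  rewrite !mxE => h; apply: le_trans h _; rewrite le_eqVlt; apply/orP; left; apply/eqP.
  by apply: eq_bigr => k _; rewrite !mxE.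
have dS : mxle (S^T *m d) p.
  move=> l j; rewrite (ord1 j); have [_ [_ H]] := Hsig l; apply: le_trans H.
  rewrite dotvE mxE le_eqVlt; apply/orP; left; apply/eqP; apply: eq_bigr => k _.
  by rewrite !mxE mulrC.
have dT : mxle (T^T *m d) (Rm^T *m p).
  move=> i j; rewrite (ord1 j); have [_ [_ H]] := Htau i; apply: le_trans H.
  rewrite dotvE mxE le_eqVlt; apply/orP; left; apply/eqP; apply: eq_bigr => k _.
  by rewrite !mxE mulrC.
pose P := T - S *m Rm; pose q := y0 + S *m r.
have Pq h : P *m h + q = y0 + T *m h + S *m (r - Rm *m h).
  rewrite /P /q mulmxBl mulmxBr -mulmxA.
  rewrite -!addrA [RHS]addrCA; congr (_ + _); rewrite addrCA; congr (_ + _); exact: addrC.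
have feas : aff_feasible A B Rm r x P q.
  split => // h [h0 hr]; have rh : mxnn (r - Rm *m h) by move/mxleE: hr.
  split; last first.
    rewrite Pq; apply: mxnnD; first by apply: mxnnD => //; apply: mxnn_mul.
    by apply: mxnn_mul.
  rewrite Pq mulmxDr mulmxDr !mulmxA.
  have F2 := mxle_mul BT h0; have F3 := mxle_mul BS rh.
  rewrite mulmxBl mul1mx in F2; rewrite mulNmx [Q^T *m (_ - _)]mulmxBr mulmxA in F3.
  move=> i j; move: (y01 i j) (F2 i j) (F3 i j); rewrite !mxE; lra.
apply: ge_ereal_inf; exists ((dotv c x)%:E + Affv P q)%E.
  by exists (x, P, q).
apply: leeD2l; apply: ge_ereal_sup => _ [h [h0 hr] <-]; rewrite lee_fin.
have rh : mxnn (r - Rm *m h) by move/mxleE: hr.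
rewrite Pq !dotvDr (dotv_mul d T) (dotv_mul d S).
have e1 := dot_lel h0 dT; have e2 := dot_lel rh dS.
rewrite [dotv p (_ - _)]dotvBr in e2.
have e3 : dotv (Rm^T *m p) h = dotv p (Rm *m h) by rewrite [RHS]dotv_mul.
have e4 : dotv p r = dotv r p by apply: dotvC.
lra.
Qed.


Lemma part2_inner (S : set 'cV[R]_m) (kappa : R) x :
  is_simplex S -> 1 <= kappa -> S `<=` Wset B d -> Wset B d `<=` scale_set kappa S ->
  mxnn x ->
  (z_dAff A B c d Rm r <= kappa%:E * ((dotv c x)%:E + dARin x))%E.
Proof.
move=> [v [hv ->]] k1 SW WS x0.
have k0 : 0 < kappa by apply: lt_le_trans k1.
have vW j : Wset B d (v j).
  apply: SW; exists (fun i => (i == j)%:R); split; first by move=> i; case: (_ == _).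
  split; last by rewrite sum_indv.
  by have := sum_ind j (fun _ => 1 : R); under eq_bigr do rewrite mulr1.
have := dARin_ge0 x.
case E: (dARin x) => [s| |] // s0; last first.
  by rewrite addey // gt0_muley ?leey // lte_fin.
apply/lee_addgt0Pr => e e0.
pose e' := e / kappa.
have e'0 : 0 < e' by rewrite divr_gt0.
have [lam Hlam] : {lam : 'I_m.+1 -> 'cV[R]_L & forall j, mxnn (lam j) /\
    mxle (v j) (Rm^T *m lam j) /\ - dotv (A *m x) (v j) + dotv r (lam j) < s + e'}.
  apply: (@choice _ _ (fun j l => mxnn l /\ mxle (v j) (Rm^T *m l) /\
      - dotv (A *m x) (v j) + dotv r l < s + e')) => j.
  have : (dinner x (v j) < (s + e')%:E)%E.
    have h1 : (dinner x (v j) <= dARin x)%E by apply: ereal_sup_ubound; exists (v j).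
    by apply: le_lt_trans h1 _; rewrite E lte_fin ltrDl.
  by case/ereal_inf_lt => _ [l [l0 l1] <-]; rewrite lte_fin => l2; exists l.
pose Lam : 'M[R]_(L, m.+1) := \matrix_(l, j) lam j l 0.
pose N := (invmx (Mv v) *m (col_mx (0 : 'M[R]_(1, m)) (1%:M : 'M[R]_m) : 'M[R]_(m.+1, m))).
pose Q := Lam *m N.
pose p := kappa *: (Lam *m bc v 0).
have Qp w : Q *m w + p = kappa *: (Lam *m bc v (kappa^-1 *: w)).
  rewrite (bc_affine v (kappa^-1 *: w)) mulmxDr scalerDr /p addrC; congr (_ + _).
  by rewrite -scalemxAr -scalemxAr scalerA mulfV ?gt_eqF // scale1r /Q -mulmxA.
have Wrep w : Wset B d w -> exists th : 'I_m.+1 -> R, (forall j, 0 <= th j) /\ \sum_j th j = 1 /\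
    Q *m w + p = kappa *: \sum_j th j *: lam j /\ w = kappa *: \sum_j th j *: v j.
  move=> /WS [s1 [th [th0 [th1 ->]]]] <-; exists th; do 3!split => //.
  rewrite Qp scalerA mulVf ?gt_eqF // scale1r (bc_uniq hv th1 (erefl _)).
  by rewrite mul_col.
have feas : daff_feasible B d Rm x Q p.
  split => // w Ww; have [th [th0 [th1 [-> ->]]]] := Wrep w Ww; split.
    apply/mxnnE => i j; rewrite mxE summxE; apply: mulr_ge0; first exact: ltW.
    apply: sumr_ge0 => l _; rewrite mxE; apply: mulr_ge0 => //.
    by have [/mxnnE H _] := Hlam l; apply: H.
  rewrite -scalemxAr mulmx_sumr => i j; rewrite !mxE !summxE; apply: ler_wpM2l; first exact: ltW.
  apply: ler_sum => l _; rewrite -scalemxAr !mxE; apply: ler_wpM2l => //.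
  by have [_ [H _]] := Hlam l; move: (H i j); rewrite mxE.
have val : (dAffv x Q p <= (kappa * (s + e'))%:E)%E.
  apply: ge_ereal_sup => _ [w Ww <-]; rewrite lee_fin.
  have [th [th0 [th1 [-> ->]]]] := Wrep w Ww.
  rewrite dotvZr dotvZr !dotv_sumr.
  under eq_bigr do rewrite dotvZr; under [X in _ + _ * X]eq_bigr do rewrite dotvZr.
  rewrite -mulrN -mulrDr; apply: ler_wpM2l; first exact: ltW.
  rewrite -sumrN -big_split /= -[s + e']mul1r -th1 mulr_suml; apply: ler_sum => j _.
  rewrite -mulrN -mulrDr; apply: ler_wpM2l => //; apply: ltW.
  by have [_ [_ H]] := Hlam j.
have hz : (z_dAff A B c d Rm r <= (dotv c x)%:E + dAffv x Q p)%E.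
  by rewrite z_dAff_E; apply: ereal_inf_lbound; exists (x, Q, p).
apply: le_trans hz _.
apply: le_trans (leeD2l _ val) _; rewrite -!EFinD lee_fin.
have ke : kappa * e' = e by rewrite /e' mulrC divfK ?gt_eqF.
have := dot_ge0 c0 x0; nra.
Qed.

End Main.

Lemma inf_scale (R : realType) (T : Type) (X : set T) (F : T -> \bar R) (y : \bar R) (k : R) :
  0 < k -> (forall x, X x -> (y <= k%:E * F x)%E) ->
  (y <= k%:E * ereal_inf [set F x | x in X])%E.
Proof.
move=> k0 H.
have ki : (k^-1)%:E \is a fin_num by [].
have ki0 : (0 < (k^-1)%:E)%E by rewrite lte_fin invr_gt0.
suff h : ((k^-1)%:E * y <= ereal_inf [set F x | x in X])%E.
  have -> : y = (k%:E * ((k^-1)%:E * y))%E by rewrite muleA -EFinM mulfV ?gt_eqF // mul1e.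
  by apply: lee_wpmul2l => //; rewrite lee_fin ltW.
apply: le_ereal_inf_tmp => _ [x Xx <-].
have := H x Xx; rewrite -(lee_pmul2l ki ki0) muleA -EFinM mulVf ?gt_eqF // mul1e; move=> hh; exact: hh.
Qed.

Theorem lemma4 (R : realType) (m n L : nat) (A B : 'M[R]_(m, n))
  (c d : 'cV[R]_n) (Rm : 'M[R]_(L, m)) (r : 'cV[R]_L) :
  mxnn A -> mxnn B -> mxnn c -> mxnn d -> mxnn Rm -> mxnn r ->
  compact (Uset Rm r) ->
  forall (S : set 'cV[R]_m) (kappa : R),
    is_simplex S -> 1 <= kappa ->
    S `<=` Wset B d -> Wset B d `<=` scale_set kappa S ->
  ((z_dAR A B c d Rm r <= z_dAff A B c d Rm r)%E /\
   (z_dAff A B c d Rm r <= kappa%:E * z_dAR A B c d Rm r)%E) /\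
  ((z_AR A B c d Rm r <= z_Aff A B c d Rm r)%E /\
   (z_Aff A B c d Rm r <= kappa%:E * z_AR A B c d Rm r)%E).
Proof.
move=> A0 B0 c0 d0 Rm0 r0 _ S kappa hS k1 SW WS.
have k0 : 0 < kappa by apply: lt_le_trans k1.
have P2 : (z_dAff A B c d Rm r <= kappa%:E * z_dAR A B c d Rm r)%E.
  rewrite z_dAR_E; apply: inf_scale => // x x0.
  exact: (@part2_inner R m n L A B c d Rm r c0 d0 r0 S kappa x hS k1 SW WS x0).
split; split => //.
- exact: part1.
- exact: part3.
- have PA : (z_Aff A B c d Rm r <= z_dAff A B c d Rm r)%E.
    rewrite [X in (_ <= X)%E]z_dAff_E; apply: le_ereal_inf_tmp => _ [[[x Q] p] hf <-].
    exact: partA.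
  apply: le_trans PA _; apply: le_trans P2 _.
  apply: lee_wpmul2l; first by rewrite lee_fin ltW.
  exact: partB'.
Qed.
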